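(* Let $L$ be a construction of an ASC-hypergraph $H$, let $Y\in L$ and $Z=\bigcup H\setminus Y$. Then $L_Y$ and ${}_Z L$ are the unique constructions $K$ of $H_Y$ and $J$ of ${}_Z H$ such that $K\ast J=L$.
   Context: A hypergraph is a finite set $H$ of nonempty subsets of some finite set; its carrier is $\bigcup H$. For a family $F$ and set $Y$, $F_Y=\{X\in F\mid X\subseteq Y\}$, and ${}_Z F=\{X\cap Z\mid X\in F,\ X\cap Z\neq\emptyset\}$. For $X\subseteq\bigcup H$, $X\cup_H Y=X\cup Y$ if $X\cup Y\in H$, and $X\cup_H Y=X$ otherwise. For constructions $K$ of $H_Y$ and $J$ of ${}_Z H$ the continuation is $K\ast J=K\cup\{X\cup_H Y\mid X\in J\}$. A hypergraph partition of $H$ is a partition $\{H_1,\dots,H_n\}$ ($n\ge0$) of the set $H$ with $\{\bigcup H_1,\dots,\bigcup H_n\}$ a partition of $\bigcup H$; $H$ is connected if it has exactly one hypergraph partition; the finest hypergraph partition is the unique one whose blocks are connected. $H$ is atomic if $\{x\}\in H$ for all $x\in\bigcup H$; saturated if $X_1,X_2\in H$ with $X_1\cap X_2\neq\emptyset$ imply $X_1\cup X_2\in H$. An ASC-hypergraph is one that is atomic, saturated and connected. Constructions of an atomic $H$, by induction on $|\bigcup H|$: (0) $\emptyset$ is the only construction of $\emptyset$; (1) if $|\bigcup H|\ge1$, $H$ connected, $x\in\bigcup H$, $K$ a construction of $H_{\bigcup H\setminus\{x\}}$, then $K\cup\{\bigcup H\}$ is a construction of $H$; (2) if $H$ is not connected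 with finest hypergraph partition $\{H_1,\dots,H_n\}$, $n\ge2$, and $K_i$ is a construction of $H_i$, then $K_1\cup\dots\cup K_n$ is a construction of $H$. *)

(* Defs.v *)
From mathcomp Require Import all_boot.
Set Implicit Arguments. Unset Strict Implicit. Unset Printing Implicit Defensive.

Section Hyper.
Variable T : finType.
Implicit Types (H F : {set {set T}}) (P : {set {set {set T}}}) (X Y Z : {set T}).

Definition hypergraph H : Prop := set0 \notin H.

Definition restr F (Y : {set T}) : {set {set T}} := [set X in F | X \subset Y].

Definition trace Z F : {set {set T}} := [set X :&: Z | X in F & X :&: Z != set0].

Definition hunion H X Y : {set T} := if X :|: Y \in H then X :|: Y else X.

Definition cont H Y (K J : {set {set T}}) : {set {set T}} := K :|: [set hunion H X Y | X in J].

(* hypergraph partition: a partition P of the set H whose carriers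
   {cover B | B in P} form a partition of cover H (pairwise disjoint;
   nonemptiness and covering are then automatic). *)
Definition hpartition H P : Prop :=
  partition P H /\
  (forall B1 B2, B1 \in P -> B2 \in P -> B1 != B2 -> [disjoint cover B1 & cover B2]).

Definition connected H : Prop :=
  exists P, hpartition H P /\ forall P', hpartition H P' -> P' = P.

Definition finest_hpartition H P : Prop :=
  hpartition H P /\ forall B, B \in P -> connected B.

Definition atomic H : Prop := forall x, x \in cover H -> [set x] \in H.

Definition saturated H : Prop :=
  forall X1 X2, X1 \in H -> X2 \in H -> X1 :&: X2 != set0 -> X1 :|: X2 \in H.

Definition ASC H : Prop := [/\ hypergraph H, atomic H, saturated H & connected H].

Inductive construction : {set {set T}} -> {set {set T}} -> Prop :=
| constr_empty : construction set0 set0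
| constr_conn H x K :
    hypergraph H -> atomic H ->
    0 < #|cover H| -> connected H -> x \in cover H ->
    construction (restr H (cover H :\ x)) K ->
    construction H (K :|: [set cover H])
| constr_split H P (Kf : {set {set T}} -> {set {set T}}) :
    hypergraph H -> atomic H ->
    ~ connected H -> finest_hpartition H P -> 2 <= #|P| ->
    (forall B, B \in P -> construction B (Kf B)) ->
    construction H (\bigcup_(B in P) Kf B).

End Hyper.

(* Main.v *)
Require Import Defs.
From mathcomp Require Import all_boot.
Set Implicit Arguments. Unset Strict Implicit. Unset Printing Implicit Defensive.

Lemma disjP (U : finType) (A B : {set U}) :
  reflect (forall x, x \in A -> x \in B -> False) [disjoint A & B].
Proof.
rewrite -setI_eq0; apply: (iffP eqP) => [e x xA xB | h].
  by move: e => /setP /(_ x); rewrite !inE xA xB.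
by apply/setP=> x; rewrite !inE; apply/negP => /andP[a b]; exact: (h x a b).
Qed.

Section S.
Variable T : finType.
Implicit Types (H F L K J : {set {set T}}) (P : {set {set {set T}}}) (X Y Z W V : {set T}).

Lemma in_cover F x : reflect (exists2 X, X \in F & x \in X) (x \in cover F).
Proof. exact: bigcupP. Qed.

Lemma sub_cover F X : X \in F -> X \subset cover F.
Proof. by move=> XF; apply/subsetP=> x xX; apply/in_cover; exists X. Qed.

Lemma cover_mono F1 F2 : F1 \subset F2 -> cover F1 \subset cover F2.
Proof.
move=> s; apply/subsetP=> x /in_cover [X XF xX]; apply/in_cover; exists X=> //.
exact: (subsetP s).
Qed.

Lemma in_restr F Y X : (X \in restr F Y) = (X \in F) && (X \subset Y).
Proof. by rewrite /restr inE. Qed.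

Lemma restr_sub F Y : restr F Y \subset F.
Proof. by apply/subsetP=> X; rewrite in_restr => /andP[]. Qed.

Lemma cover_restr F Y : cover (restr F Y) \subset Y.
Proof.
apply/subsetP=> x /in_cover [X]; rewrite in_restr => /andP[_ /subsetP s] /s //.
Qed.

Lemma cover_restr_atomic H V : atomic H -> V \subset cover H -> cover (restr H V) = V.
Proof.
move=> hat sV; apply/eqP; rewrite eqEsubset cover_restr /=.
apply/subsetP=> x xV; apply/in_cover; exists [set x]; last by rewrite in_set1.
by rewrite in_restr hat ?(subsetP sV) // sub1set.
Qed.

Lemma in_trace Z F X : reflect (exists2 W, W \in F & X = W :&: Z /\ X != set0) (X \in trace Z F).
Proof.
apply: (iffP imsetP) => [[W] | [W WF [-> ne]]].
  by rewrite inE => /andP[WF ne] ->; exists W.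
by exists W => //; rewrite inE WF ne.
Qed.

Lemma cover_trace Z F : cover (trace Z F) = cover F :&: Z.
Proof.
apply/setP=> x; rewrite inE; apply/in_cover/andP.
  move=> [X /in_trace [W WF [-> _]]]; rewrite inE => /andP[xW xZ]; split=> //.
  by apply/in_cover; exists W.
move=> [/in_cover [W WF xW] xZ]; exists (W :&: Z); last by rewrite inE xW.
by apply/in_trace; exists W => //; split => //; apply/set0Pn; exists x; rewrite inE xW.
Qed.

Lemma trace_hyp Z F : hypergraph (trace Z F).
Proof. by apply/negP => /in_trace [W _ [_ /eqP]]. Qed.

Lemma trace_atomic Z H : atomic H -> atomic (trace Z H).
Proof.
move=> hat x; rewrite cover_trace inE => /andP[xH xZ]; apply/in_trace.
exists [set x]; first exact: hat.
split; first by apply/setP=> y; rewrite !inE; case: eqP => // ->.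
by apply/set0Pn; exists x; rewrite inE.
Qed.

Lemma trace_sat Z H : saturated H -> saturated (trace Z H).
Proof.
move=> sat X1 X2 /in_trace [W1 W1H [-> ne1]] /in_trace [W2 W2H [-> ne2]] ne.
apply/in_trace; exists (W1 :|: W2); last first.
  split; first by rewrite setIUl.
  case/set0Pn: ne1 => y; rewrite !inE => /andP[a b].
  by apply/set0Pn; exists y; rewrite !inE a b.
apply: sat => //; case/set0Pn: ne => y; rewrite !inE => /andP[/andP[a _] /andP[b _]].
by apply/set0Pn; exists y; rewrite inE a b.
Qed.

Lemma restr_hyp F Y : hypergraph F -> hypergraph (restr F Y).
Proof. by move=> h; rewrite /hypergraph in_restr negb_and h. Qed.

Lemma restr_atomic H Y : atomic H -> atomic (restr H Y).
Proof.
move=> hat x xc; rewrite in_restr sub1set (subsetP (cover_restr H Y)) // andbT.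
by apply: hat; apply: (subsetP (cover_mono (restr_sub H Y))).
Qed.

Lemma restr_sat H Y : saturated H -> saturated (restr H Y).
Proof.
move=> sat X1 X2; rewrite !in_restr => /andP[a b] /andP[c d] ne.
by rewrite sat // subUset b d.
Qed.


Lemma hp_cover H P : hpartition H P -> cover P = H.
Proof. by case=> /and3P[/eqP -> _ _]. Qed.

Lemma hp_set0 H P : hpartition H P -> set0 \notin P.
Proof. by case=> /and3P[_ _ ->]. Qed.

Lemma hp_sub H P B : hpartition H P -> B \in P -> B \subset H.
Proof. by move=> hp BP; rewrite -(hp_cover hp); apply: bigcup_sup. Qed.

Lemma hp_block H P X : hpartition H P -> X \in H -> exists2 B, B \in P & X \in B.
Proof. by move=> hp; rewrite -(hp_cover hp) => /bigcupP. Qed.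

Lemma hp_eq H P B1 B2 x : hpartition H P -> B1 \in P -> B2 \in P ->
  x \in cover B1 -> x \in cover B2 -> B1 = B2.
Proof.
case=> _ dis B1P B2P x1 x2; case: (eqVneq B1 B2) => // ne.
by have := disjointFr (dis _ _ B1P B2P ne) x1; rewrite x2.
Qed.

Lemma hp_eqS H P B1 B2 X : hpartition H P -> B1 \in P -> B2 \in P -> X != set0 ->
  X \subset cover B1 -> X \subset cover B2 -> B1 = B2.
Proof.
move=> hp B1P B2P /set0Pn [x xX] s1 s2.
exact: (hp_eq hp B1P B2P (subsetP s1 x xX) (subsetP s2 x xX)).
Qed.

Lemma hyp_sub F1 F2 : hypergraph F2 -> F1 \subset F2 -> hypergraph F1.
Proof. by move=> h s; apply/negP => /(subsetP s); apply/negP. Qed.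

Lemma hyp_ne F X : hypergraph F -> X \in F -> X != set0.
Proof. by move=> h XF; apply/eqP => e; move: h; rewrite /hypergraph -e XF. Qed.

Lemma single_hp H : H != set0 -> hpartition H [set H].
Proof.
move=> ne; split.
  by rewrite /partition cover1 eqxx trivIset1 in_set1 eq_sym ne.
by move=> B1 B2; rewrite !in_set1 => /eqP -> /eqP ->; rewrite eqxx.
Qed.

Lemma hp_one H P B : hypergraph H -> hpartition H P -> B \in P ->
  cover H \subset cover B -> P = [set H].
Proof.
move=> hy hp BP sc.
have PB : forall B', B' \in P -> B' = B.
  move=> B' B'P; have /set0Pn [X XB'] : B' != set0.
    by apply/negP => /eqP e; move: (hp_set0 hp); rewrite -e B'P.
  have XH : X \in H by apply: (subsetP (hp_sub hp B'P)).
  apply: (hp_eqS hp B'P BP (hyp_ne hy XH)); first exact: sub_cover.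
  exact: subset_trans (sub_cover XH) sc.
have eP : P = [set B].
  by apply/setP=> B'; rewrite in_set1; apply/idP/eqP=> [/PB|->].
have eB : B = H by rewrite -(hp_cover hp) eP cover1.
by rewrite eP eB.
Qed.

Lemma cover_conn H : hypergraph H -> cover H \in H -> connected H.
Proof.
move=> hy cH; exists [set H]; split.
  by apply: single_hp; apply/set0Pn; exists (cover H).
move=> P' hp; have [B BP cB] := hp_block hp cH.
exact: (hp_one hy hp BP (sub_cover cB)).
Qed.

Lemma hp_ne H P : hpartition H P -> 0 < #|P| -> H != set0.
Proof.
move=> hp; rewrite card_gt0 => /set0Pn [B BP].
have /set0Pn [X XB] : B != set0.
  by apply/negP => /eqP e; move: (hp_set0 hp); rewrite -e BP.
by apply/set0Pn; exists X; apply: (subsetP (hp_sub hp BP)).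
Qed.

Lemma notconn H P : hpartition H P -> 1 < #|P| -> ~ connected H.
Proof.
move=> hp c2 [Q [_ u]].
have ne : H != set0 by apply: (hp_ne hp); apply: ltn_trans c2.
have e1 := u _ hp; have e2 := u _ (single_hp ne).
by move: c2; rewrite e1 -e2 cards1.
Qed.


Lemma conn_cover H : hypergraph H -> saturated H -> connected H -> H != set0 ->
  cover H \in H.
Proof.
move=> hy sat [Q [_ u]] /set0Pn [X0 X0H].
case: (arg_maxnP (fun X : {set T} => #|X|) X0H) => M MH0 Mmax.
have MH : M \in H := MH0.
set B := restr H M; set C := H :\: B.
have MB : M \in B by rewrite in_restr MH subxx.
have cB : cover B = M.
  apply/eqP; rewrite eqEsubset cover_restr; exact: sub_cover.
have CM : forall X, X \in C -> X :&: M = set0.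
  move=> X; rewrite inE /B in_restr => /andP[nXM XH]; apply/eqP.
  case: (eqVneq (X :&: M) set0) => // ne; exfalso; move/negP: nXM; apply.
  have XMH := sat _ _ XH MH ne.
  have e : X :|: M == M.
    rewrite eq_sym eqEcard subsetUr /=; exact: Mmax.
  by rewrite XH -(eqP e) subsetUl.
case: (eqVneq C set0) => [C0|Cne].
  have eH : H = B.
    apply/setP=> X; apply/idP/idP; last by move/(subsetP (restr_sub _ _)).
    by move=> XH; apply: contraLR (_ : X \notin C); [move=> nb; rewrite inE nb XH | rewrite C0 inE].
  by rewrite eH cB.
have hp2 : hpartition H [set B; C].
  split.
    apply/and3P; split.
    - apply/eqP/setP=> X; apply/bigcupP/idP.
        case=> A; rewrite !inE => /orP[] /eqP -> XA; first exact: (subsetP (restr_sub H M) X XA).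
        by move: XA; rewrite inE => /andP[].
      move=> XH; case XB: (X \in B); first by exists B => //; rewrite !inE eqxx.
      exists C; first by rewrite !inE eqxx orbT.
      by rewrite inE XB XH.
    - apply/trivIsetP=> A1 A2; rewrite !inE => /orP[] /eqP -> /orP[] /eqP -> //; rewrite ?eqxx //= => _.
        by rewrite disjoint_sym; apply/disjP => X; rewrite inE => /andP[/negP].
      by apply/disjP => X; rewrite inE => /andP[/negP].
    - rewrite !inE negb_or; apply/andP; split.
        by apply/negP => /eqP e; move: MB; rewrite -e inE.
      by rewrite eq_sym.
  move=> A1 A2; rewrite !inE => /orP[] /eqP -> /orP[] /eqP -> //; rewrite ?eqxx //= => _.
    rewrite cB; apply/disjP=> x xM /in_cover [X XC xX].
    by move: (CM X XC) => /setP /(_ x); rewrite !inE xX xM.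
  rewrite cB disjoint_sym; apply/disjP=> x xM /in_cover [X XC xX].
  by move: (CM X XC) => /setP /(_ x); rewrite !inE xX xM.
have Hne : H != set0 by apply/set0Pn; exists X0.
have e : [set B; C] = [set H] by rewrite (u _ hp2) (u _ (single_hp Hne)).
have eB : B = H by apply/eqP; rewrite -in_set1 -e !inE eqxx.
have eC : C = H by apply/eqP; rewrite -in_set1 -e !inE eqxx orbT.
have : M \in C by rewrite eC.
by rewrite inE MB.
Qed.


Lemma constr_hyp H L : construction H L -> hypergraph H.
Proof. by case=> //; rewrite /hypergraph inE. Qed.

Lemma constr_atomic H L : construction H L -> atomic H.
Proof. by case=> // x; rewrite /cover big_set0 inE. Qed.

Lemma constr_sub H L : construction H L -> forall W, W \in L -> W != set0 /\ W \subset cover H.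
Proof.
elim=> {H L} [|H x K hy hat c0 conn xH cK IH|H P Kf hy hat nc [hp _] c2 cKf IH] W.
- by rewrite inE.
- rewrite !inE => /orP[/IH [ne s]|/eqP ->].
    by split=> //; apply: subset_trans s (cover_mono (restr_sub _ _)).
  by split=> //; rewrite -card_gt0.
- move=> /bigcupP [B BP WK]; have [ne s] := IH B BP W WK; split=> //.
  exact: subset_trans s (cover_mono (hp_sub hp BP)).
Qed.

Lemma block_atomic H P B : atomic H -> hpartition H P -> B \in P -> atomic B.
Proof.
move=> hat hp BP x xB.
have xH : x \in cover H := subsetP (cover_mono (hp_sub hp BP)) x xB.
have [B' B'P xB'] := hp_block hp (hat x xH).
have xcB' : x \in cover B' by apply/in_cover; exists [set x]; rewrite ?in_set1.
by rewrite (hp_eq hp BP B'P xB xcB').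
Qed.

Lemma block_sat H P B : hypergraph H -> saturated H -> hpartition H P -> B \in P -> saturated B.
Proof.
move=> hy sat hp BP X1 X2 X1B X2B ne.
have sB := hp_sub hp BP.
have [B' B'P UB'] := hp_block hp (sat _ _ (subsetP sB _ X1B) (subsetP sB _ X2B) ne).
have ne1 := hyp_ne hy (subsetP sB _ X1B).
have e : B = B'.
  apply: (hp_eqS hp BP B'P ne1); first exact: sub_cover.
  exact: subset_trans (subsetUl _ _) (sub_cover UB').
by rewrite e.
Qed.

Lemma constr_props H L : construction H L -> saturated H ->
  [/\ L \subset H,
      forall W1 W2, W1 \in L -> W2 \in L -> [|| W1 \subset W2, W2 \subset W1 | W1 :&: W2 == set0] &
      forall W1 W2, W1 \in L -> W2 \in L -> W1 :&: W2 = set0 -> W1 :|: W2 \notin H].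
Proof.
move=> cL; elim: cL => {H L} [|H x K hy hat c0 conn xH cK IH|H P Kf hy hat nc [hp bconn] c2 cKf IH] sat.
- by split=> //; rewrite ?sub0set // => W1; rewrite inE.
- have [s lam dis] := IH (restr_sat (Y := cover H :\ x) sat).
  have csub := constr_sub cK.
  have cov := cover_restr H (cover H :\ x).
  have HH : cover H \in H.
    apply: conn_cover => //; apply/set0Pn; move: c0; rewrite card_gt0 => /set0Pn [y /in_cover [X XH _]].
    by exists X.
  split.
  + apply/subsetP=> W; rewrite !inE => /orP[/(subsetP s)|/eqP -> //].
    exact: (subsetP (restr_sub _ _)).
  + have WV : forall W, W \in K :|: [set cover H] -> W \subset cover H.
      move=> W; rewrite !inE => /orP[/csub [_ sW]|/eqP -> //].
      exact: subset_trans sW (subset_trans cov (subsetDl _ _)).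
    move=> W1 W2; rewrite !inE => /orP[W1K|/eqP ->] /orP[W2K|/eqP ->].
    * exact: lam.
    * by rewrite (WV W1) ?inE ?W1K.
    * by rewrite (WV W2) ?orbT ?inE ?W2K.
    * by rewrite subxx.
  + move=> W1 W2; rewrite !inE => /orP[W1K|/eqP ->] /orP[W2K|/eqP ->] e.
    * have := dis _ _ W1K W2K e; rewrite in_restr negb_and => /orP[] // /negP nsub.
      apply/negP => _; apply: nsub; rewrite subUset.
      have [_ s1] := csub _ W1K; have [_ s2] := csub _ W2K.
      by rewrite (subset_trans s1 cov) (subset_trans s2 cov).
    * have [ne s1] := csub _ W1K; move: ne; rewrite -e.
      have -> : W1 :&: cover H = W1 by apply/setIidPl; apply: subset_trans s1 (subset_trans cov (subsetDl _ _)).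
      by rewrite eqxx.
    * have [ne s1] := csub _ W2K; move: ne; rewrite -e.
      have -> : cover H :&: W2 = W2 by apply/setIidPr; apply: subset_trans s1 (subset_trans cov (subsetDl _ _)).
      by rewrite eqxx.
    * by move: (hyp_ne hy HH); rewrite -e setIid eqxx.
- have IHB : forall B, B \in P -> _ := fun B BP => IH B BP (block_sat hy sat hp BP).
  split.
  + apply/subsetP=> W /bigcupP [B BP WK]; have [s _ _] := IHB B BP.
    exact: (subsetP (hp_sub hp BP)) (subsetP s _ WK).
  + move=> W1 W2 /bigcupP [B1 B1P W1K] /bigcupP [B2 B2P W2K].
    case: (eqVneq B1 B2) => [e|ne].
      by subst B2; have [_ lam _] := IHB B1 B1P; apply: lam.
    have [_ s1] := constr_sub (cKf _ B1P) W1K; have [_ s2] := constr_sub (cKf _ B2P) W2K.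
    apply/orP; right; apply/orP; right; apply/eqP/setP => y; rewrite !inE.
    apply/negP => /andP[y1 y2]; move/eqP: ne; apply.
    exact: (hp_eq hp B1P B2P (subsetP s1 y y1) (subsetP s2 y y2)).
  + move=> W1 W2 /bigcupP [B1 B1P W1K] /bigcupP [B2 B2P W2K] e; apply/negP => UH.
    have [B BP UB] := hp_block hp UH.
    have [ne1 s1] := constr_sub (cKf _ B1P) W1K; have [ne2 s2] := constr_sub (cKf _ B2P) W2K.
    have sU := sub_cover UB.
    have e1 : B1 = B by apply: (hp_eqS hp B1P BP ne1 s1); apply: subset_trans (subsetUl _ _) sU.
    have e2 : B2 = B by apply: (hp_eqS hp B2P BP ne2 s2); apply: subset_trans (subsetUr _ _) sU.
    subst B1 B2; have [_ _ dis] := IHB B BP.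
    by move: (dis _ _ W1K W2K e); rewrite UB.
Qed.


Lemma split_build H P (Kf : {set {set T}} -> {set {set T}}) :
  hypergraph H -> atomic H -> hpartition H P -> (forall B, B \in P -> connected B) ->
  (forall B, B \in P -> construction B (Kf B)) -> construction H (\bigcup_(B in P) Kf B).
Proof.
move=> hy hat hp bc cK; case: (ltnP 1 #|P|) => [c2|].
  apply: (@constr_split _ H P Kf) => //; first exact: notconn hp c2.
rewrite leq_eqVlt ltnS leqn0 => /orP[/cards1P [B eP] | /eqP/cards0_eq eP].
  have eB : B = H by rewrite -(hp_cover hp) eP cover1.
  by rewrite eP big_set1 -eB; apply: cK; rewrite eP in_set1.
have eH : H = set0 by rewrite -(hp_cover hp) eP /cover big_set0.
by rewrite eP big_set0 eH; constructor.
Qed.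


Lemma restr_id F Y : (forall X, X \in F -> X \subset Y) -> restr F Y = F.
Proof. by move=> h; apply/setP=> X; rewrite in_restr; case XF: (X \in F) => //=; apply: h. Qed.

Lemma restr_restr F Y Y' : Y \subset Y' -> restr (restr F Y') Y = restr F Y.
Proof.
move=> s; apply/setP=> X; rewrite !in_restr -andbA; congr (_ && _).
by apply/andP/idP => [[] //| XY]; split=> //; apply: subset_trans XY s.
Qed.

Lemma restrA H L Y : construction H L -> Y \in L -> construction (restr H Y) (restr L Y).
Proof.
move=> cL; elim: cL Y => {H L} [|H x K hy hat c0 conn xH cK IH|H P Kf hy hat nc [hp bconn] c2 cKf IH] Y.
- by rewrite inE.
- have cL : construction H (K :|: [set cover H]) by apply: constr_conn cK.
  have cov := cover_restr H (cover H :\ x).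
  rewrite !inE => /orP[YK|/eqP ->].
    have [_ sY] := constr_sub cK YK.
    have sY' : Y \subset cover H :\ x := subset_trans sY cov.
    have -> : restr (K :|: [set cover H]) Y = restr K Y.
      apply/setP=> W; rewrite !in_restr !inE; case: (eqVneq W (cover H)) => [->|]; rewrite ?orbF //.
      rewrite orbT /=; have [WK|nWK] := boolP (cover H \in K); rewrite ?WK //.
      apply/negP => sV; have := subsetP (subset_trans sV sY') x xH.
      by rewrite !inE eqxx.
    by rewrite -(restr_restr H sY'); apply: IH.
  rewrite restr_id; last by move=> X /sub_cover.
  by rewrite restr_id // => W /(constr_sub cL) [].
- move=> /bigcupP [B0 B0P YK].
  have [neY sY] := constr_sub (cKf _ B0P) YK.
  have -> : restr H Y = restr B0 Y.
    apply/setP=> X; rewrite !in_restr; apply/andP/andP => [[XH XY]|[XB XY]]; last first.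
      by split=> //; apply: (subsetP (hp_sub hp B0P)).
    split=> //; have [B BP XB] := hp_block hp XH.
    have -> // : B0 = B.
    apply: (hp_eqS hp B0P BP (hyp_ne hy XH)); first exact: subset_trans XY sY.
    exact: sub_cover.
  have -> : restr (\bigcup_(B in P) Kf B) Y = restr (Kf B0) Y.
    apply/setP=> W; rewrite !in_restr; apply/andP/andP => [[/bigcupP [B BP WK] WY]|[WK WY]].
      split=> //; have [neW sW] := constr_sub (cKf _ BP) WK.
      have -> // : B0 = B.
      exact: (hp_eqS hp B0P BP neW (subset_trans WY sY) sW).
    by split=> //; apply/bigcupP; exists B0.
  exact: IH.
Qed.


Lemma trace_sub Z F X : X \in trace Z F -> X != set0 /\ X \subset cover F :&: Z.
Proof. by move=> XT; split; [case/in_trace: XT => W _ [] | rewrite -cover_trace; apply: sub_cover]. Qed.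

Lemma trace_id Z F : (forall X, X \in F -> X != set0 /\ X \subset Z) -> trace Z F = F.
Proof.
move=> h; apply/setP=> X; apply/in_trace/idP => [[W WF [-> _]]|XF].
  by have [_ /setIidPl ->] := h W WF.
by exists X => //; have [ne /setIidPl ->] := h X XF.
Qed.

Lemma trace_nil Z F : (forall X, X \in F -> X :&: Z = set0) -> trace Z F = set0.
Proof.
move=> h; apply/setP=> X; rewrite inE; apply/negP => /in_trace [W WF [e ne]].
by move: ne; rewrite e h // eqxx.
Qed.

Lemma trace_U Z F1 F2 : trace Z (F1 :|: F2) = trace Z F1 :|: trace Z F2.
Proof.
apply/setP=> X; rewrite inE; apply/in_trace/orP.
  by move=> [W]; rewrite inE => /orP[] WF h; [left|right]; apply/in_trace; exists W.
by case=> /in_trace [W WF h]; exists W; rewrite // inE WF ?orbT.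
Qed.

Lemma trace_set1 Z V : V :&: Z != set0 -> trace Z [set V] = [set V :&: Z].
Proof.
move=> ne; apply/setP=> X; rewrite in_set1; apply/in_trace/eqP.
  by move=> [W]; rewrite in_set1 => /eqP -> [].
by move=> ->; exists V; rewrite ?in_set1.
Qed.

Lemma trace_bigcup Z P (Kf : {set {set T}} -> {set {set T}}) :
  trace Z (\bigcup_(B in P) Kf B) = \bigcup_(B in P) trace Z (Kf B).
Proof.
apply/setP=> X; apply/in_trace/bigcupP.
  by move=> [W /bigcupP [B BP WK] h]; exists B => //; apply/in_trace; exists W.
by move=> [B BP /in_trace [W WK h]]; exists W => //; apply/bigcupP; exists B.
Qed.

Lemma restr_trace Z H x : x \in Z ->
  restr (trace Z H) ((cover H :&: Z) :\ x) = trace Z (restr H (cover H :\ x)).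
Proof.
move=> xZ; apply/setP=> X; rewrite in_restr; apply/andP/in_trace.
  move=> [/in_trace [W WH [eX ne]] sX]; exists W; last by [].
  rewrite in_restr WH /=; apply/subsetP=> y yW; rewrite !inE.
  rewrite (subsetP (sub_cover WH)) // andbT.
  apply/negP => /eqP e; subst y.
  by have := subsetP sX x; rewrite eX !inE yW xZ eqxx => /(_ isT).
move=> [W]; rewrite in_restr => /andP[WH sW] [eX ne]; split.
  by apply/in_trace; exists W.
rewrite eX; apply/subsetP=> y; rewrite !inE => /andP[yW ->].
by have := subsetP sW y yW; rewrite !inE => /andP[-> ->].
Qed.

Lemma traceB_triv H L Z : construction H L -> cover H \subset Z ->
  construction (trace Z H) (trace Z L).
Proof.
move=> cL sZ; rewrite (trace_id (F:=H)); last first.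
  by move=> X XH; rewrite (hyp_ne (constr_hyp cL) XH) (subset_trans (sub_cover XH) sZ).
rewrite trace_id // => X /(constr_sub cL) [-> s]; split => //; exact: subset_trans s sZ.
Qed.


Lemma traceB H L Z : construction H L -> saturated H ->
  (cover H :\: Z \in L \/ cover H \subset Z) -> construction (trace Z H) (trace Z L).
Proof.
move=> cL; elim: cL Z => {H L} [|H x K hy hat c0 conn xH cK IH|H P Kf hy hat nc [hp bconn] c2 cKf IH] Z sat.
- have e : trace Z set0 = set0 by apply: trace_nil => X; rewrite inE.
  by move=> _; rewrite e; constructor.
- have cL : construction H (K :|: [set cover H]) by apply: constr_conn cK.
  case=> [YL|sZ]; last exact: traceB_triv.
  have cov := cover_restr H (cover H :\ x).
  have Hne : H != set0.
    by move: c0; rewrite card_gt0 => /set0Pn [y /in_cover [X XH _]]; apply/set0Pn; exists X.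
  have HH := conn_cover hy sat conn Hne.
  move: YL; rewrite !inE => /orP[YK|/eqP eY].
    have [_ sY] := constr_sub cK YK.
    have sY' := subset_trans sY cov.
    have xZ : x \in Z.
      apply: contraT => nxZ; have := subsetP sY' x; rewrite !inE eqxx nxZ xH.
      by move=> /(_ isT).
    have cov' : cover (restr H (cover H :\ x)) = cover H :\ x.
      by apply: cover_restr_atomic => //; apply: subsetDl.
    have cT := IH Z (restr_sat (Y := cover H :\ x) sat).
    have eY : cover (restr H (cover H :\ x)) :\: Z = cover H :\: Z.
      rewrite cov'; apply/setP=> y; rewrite !inE; apply/andP/andP => [[_ /andP[]] //|[a b]].
      split=> //; rewrite b andbT; apply/negP => /eqP e; subst y; by rewrite xZ in a.
    rewrite eY in cT; have {}cT := cT (or_introl YK).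
    have VZ : cover H :&: Z != set0 by apply/set0Pn; exists x; rewrite inE xH xZ.
    rewrite trace_U trace_set1 // -cover_trace.
    apply: (constr_conn (x := x)).
    + exact: trace_hyp.
    + exact: trace_atomic.
    + by rewrite card_gt0 cover_trace.
    + apply: cover_conn; first exact: trace_hyp.
      by rewrite cover_trace; apply/in_trace; exists (cover H).
    + by rewrite cover_trace inE xH xZ.
    + by rewrite cover_trace restr_trace.
  have e0 : cover H :&: Z = set0.
    apply/setP=> y; rewrite !inE; apply/negP => /andP[a b].
    by have := a; rewrite -{1}eY inE b.
  rewrite !trace_nil; first by constructor.
  + move=> X /(constr_sub cL) [_ s]; apply/setP=> y; rewrite !inE; apply/negP=> /andP[yX yZ].
    by move/setP: e0 => /(_ y); rewrite !inE yZ (subsetP s).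
  + move=> X XH; apply/setP=> y; rewrite !inE; apply/negP=> /andP[yX yZ].
    by move/setP: e0 => /(_ y); rewrite !inE yZ (subsetP (sub_cover XH)).
- have cL : construction H (\bigcup_(B in P) Kf B) by apply: constr_split.
  case=> [/bigcupP [B0 B0P YK]|sZ]; last exact: traceB_triv.
  set Y := cover H :\: Z in YK.
  have [neY sY] := constr_sub (cKf _ B0P) YK.
  have cB : forall B, B \in P -> construction (trace Z B) (trace Z (Kf B)).
    move=> B BP; apply: IH => //; first exact: block_sat hy sat hp BP.
    case: (eqVneq B B0) => [->|ne]; [left|right].
      suff -> : cover B0 :\: Z = Y by [].
      apply/eqP; rewrite eqEsubset; apply/andP; split.
        by apply: setSD; exact: cover_mono (hp_sub hp B0P).
      apply/subsetP=> y yY; rewrite inE (subsetP sY _ yY) andbT.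
      by move: yY; rewrite /Y inE => /andP[].
    apply/subsetP=> y yB; apply: contraT => nyZ.
    have yY : y \in Y by rewrite /Y inE nyZ (subsetP (cover_mono (hp_sub hp BP)) _ yB).
    by move: ne; rewrite (hp_eq hp BP B0P yB (subsetP sY _ yY)) eqxx.
  have trB_cov : forall B X, X \in trace Z B -> X \subset cover B.
    by move=> B X /trace_sub [_ s]; exact: subset_trans s (subsetIl _ _).
  have trne : forall (B : {set {set T}}) V y, V \in B -> y \in V -> y \in Z -> trace Z B != set0.
    move=> B V y VB yV yZ; apply/set0Pn; exists (V :&: Z); apply/in_trace; exists V => //.
    by split=> //; apply/set0Pn; exists y; rewrite inE yV yZ.
  set P' := [set trace Z B | B in P & trace Z B != set0].
  set Kf' := fun B' => \bigcup_(B in P | trace Z B == B') trace Z (Kf B).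
  have inP' : forall B' : {set {set T}}, reflect (exists2 B, B \in P & B' = trace Z B /\ B' != set0) (B' \in P').
    move=> B'; apply: (iffP imsetP) => [[B]|[B BP [e ne]]].
      by rewrite inE => /andP[BP ne] ->; exists B.
    by exists B => //; rewrite inE BP -e ne.
  have uniqB : forall B1 B2, B1 \in P -> B2 \in P -> trace Z B1 != set0 ->
      trace Z B1 = trace Z B2 -> B1 = B2.
    move=> B1 B2 B1P B2P /set0Pn [X XT] e; have [neX _] := trace_sub XT.
    apply: (hp_eqS hp B1P B2P neX); first exact: trB_cov XT.
    by rewrite e in XT; exact: trB_cov XT.
  have -> : trace Z (\bigcup_(B in P) Kf B) = \bigcup_(B' in P') Kf' B'.
    rewrite trace_bigcup; apply/setP=> X; apply/bigcupP/bigcupP.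
      move=> [B BP XT]; exists (trace Z B).
        apply/inP'; exists B => //; split => //.
        case/in_trace: XT => W WK [eX neX]; case/set0Pn: neX => y; rewrite eX inE => /andP[yW yZ].
        have [_ sW] := constr_sub (cKf _ BP) WK.
        case/in_cover: (subsetP sW y yW) => V VB yV; exact: trne VB yV yZ.
      by apply/bigcupP; exists B; rewrite ?BP ?eqxx.
    move=> [B' /inP' [B BP [-> _]] /bigcupP [B1 /andP[B1P _] XT]]; by exists B1.
  apply: split_build.
  + exact: trace_hyp.
  + exact: trace_atomic.
  + split.
      apply/and3P; split.
      * apply/eqP/setP=> X; apply/bigcupP/idP.
          move=> [B' /inP' [B BP [-> _]] /in_trace [W WB h]]; apply/in_trace; exists W => //.
          exact: (subsetP (hp_sub hp BP)).
        move=> /in_trace [W WH [eX neX]]; have [B BP WB] := hp_block hp WH.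
        exists (trace Z B); last by apply/in_trace; exists W.
        apply/inP'; exists B => //; split=> //.
        case/set0Pn: neX => y; rewrite eX inE => /andP[yW yZ]; exact: trne WB yW yZ.
      * apply/trivIsetP => A1 A2 /inP' [B1 B1P [-> ne1]] /inP' [B2 B2P [-> ne2]] neq.
        apply/disjP => X X1 X2; have [neX _] := trace_sub X1.
        have e : B1 = B2 by apply: (hp_eqS hp B1P B2P neX); [exact: trB_cov X1|exact: trB_cov X2].
        by move: neq; rewrite e eqxx.
      * by apply/negP => /inP' [B _ [_]]; rewrite eqxx.
    move=> A1 A2 /inP' [B1 B1P [-> ne1]] /inP' [B2 B2P [-> ne2]] neq.
    apply/disjP => y; rewrite !cover_trace !inE => /andP[y1 _] /andP[y2 _].
    by move: neq; rewrite (hp_eq hp B1P B2P y1 y2) eqxx.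
  + move=> B' /inP' [B BP [-> ne]]; apply: cover_conn; first exact: trace_hyp.
    have hB : hypergraph B := hyp_sub hy (hp_sub hp BP).
    have BneS : B != set0 by apply/negP => /eqP e; move: (hp_set0 hp); rewrite -e BP.
    have cBB := conn_cover hB (block_sat hy sat hp BP) (bconn B BP) BneS.
    rewrite cover_trace; apply/in_trace; exists (cover B) => //; split=> //.
    case/set0Pn: ne => X /trace_sub [/set0Pn [y yX] s]; apply/set0Pn; exists y.
    exact: (subsetP s).
  + move=> B' /inP' [B BP [-> ne]]; rewrite /Kf' (big_pred1 B); first exact: cB.
    move=> B1 /=; apply/andP/eqP => [[B1P /eqP e]|->]; last by rewrite BP eqxx.
    by symmetry; apply: uniqB.
Qed.

End S.

Lemma hunion_cases (T : finType) (H : {set {set T}}) (X Y : {set T}) :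
  hunion H X Y = X \/ hunion H X Y = X :|: Y.
Proof. by rewrite /hunion; case: ifP; [right|left]. Qed.

Lemma hunion_sub (T : finType) (H : {set {set T}}) (X Y : {set T}) : X \subset hunion H X Y.
Proof. by case: (hunion_cases H X Y) => ->; rewrite ?subxx ?subsetUl. Qed.

Lemma hunionZ (T : finType) (H : {set {set T}}) (X Y Z : {set T}) :
  X \subset Z -> Y :&: Z = set0 -> hunion H X Y :&: Z = X.
Proof.
move=> sX e; case: (hunion_cases H X Y) => ->; first exact/setIidPl.
by rewrite setIUl e setU0; apply/setIidPl.
Qed.

Theorem proposition7p8 (T : finType) (H L : {set {set T}}) (Y : {set T}) :
  ASC H -> construction H L -> Y \in L ->
  [/\ construction (restr H Y) (restr L Y),
      construction (trace (cover H :\: Y) H) (trace (cover H :\: Y) L),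
      cont H Y (restr L Y) (trace (cover H :\: Y) L) = L &
      forall K J : {set {set T}},
        construction (restr H Y) K ->
        construction (trace (cover H :\: Y) H) J ->
        cont H Y K J = L ->
        K = restr L Y /\ J = trace (cover H :\: Y) L].
Proof.
move=> [hy hat sat conn] cL YL.
set Z := cover H :\: Y.
have [neY sY] := constr_sub cL YL.
have [LH lam dis] := constr_props cL sat.
have YZ : Y :&: Z = set0.
  by apply/setP=> y; rewrite !inE; case: (y \in Y); rewrite ?andbF.
have keyW : forall W, W \in L -> W :&: Z != set0 -> hunion H (W :&: Z) Y = W.
  move=> W WL ne; have [_ sW] := constr_sub cL WL.
  case/or3P: (lam W Y WL YL) => [WY|YW|/eqP WY0].
  - case/set0Pn: ne => y; rewrite !inE => /andP[yW /andP[nyY _]].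
    by move: nyY; rewrite (subsetP WY y yW).
  - have e : W :&: Z :|: Y = W.
      apply/eqP; rewrite eqEsubset subUset subsetIl YW /=.
      apply/subsetP=> y yW; rewrite !inE yW (subsetP sW y yW) /=.
      by case: (y \in Y); rewrite ?orbT.
    by rewrite /hunion e (subsetP LH).
  - have e : W :&: Z = W.
      apply/setIidPl/subsetP=> y yW; rewrite !inE (subsetP sW y yW) andbT.
      apply/negP=> yY; move/setP: WY0 => /(_ y); by rewrite !inE yW yY.
    by rewrite /hunion e (negbTE (dis W Y WL YL WY0)).
split.
- exact: restrA.
- apply: traceB => //; left.
  suff -> : cover H :\: Z = Y by [].
  apply/setP=> y; rewrite !inE; case yY: (y \in Y); rewrite ?andbF //=; last by case: (y \in cover H).
  by rewrite (subsetP sY y yY).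
- apply/setP=> W; rewrite /cont inE; apply/orP/idP.
    case=> [|/imsetP [X /in_trace [W0 W0L [eX ne]] ->]]; first by rewrite in_restr => /andP[].
    by rewrite eX keyW // -eX.
  move=> WL; case WY: (W \subset Y); first by left; rewrite in_restr WL WY.
  right; have [_ sW] := constr_sub cL WL.
  have ne : W :&: Z != set0.
    case/subsetPn: (negbT WY) => y yW nyY; apply/set0Pn; exists y.
    by rewrite !inE yW nyY (subsetP sW y yW).
  apply/imsetP; exists (W :&: Z); last by rewrite keyW.
  by apply/in_trace; exists W.
move=> K J cK cJ e.
have Ksub : forall W, W \in K -> W != set0 /\ W \subset Y.
  move=> W WK; have [ne s] := constr_sub cK WK; split=> //.
  exact: subset_trans s (cover_restr _ _).
have Jsub : forall X, X \in J -> X != set0 /\ X \subset Z.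
  move=> X XJ; have [ne s] := constr_sub cJ XJ; split=> //.
  by apply: subset_trans s _; rewrite cover_trace subsetIr.
split.
- rewrite -e; apply/setP=> W; rewrite /cont in_restr inE; apply/idP/idP.
    by move=> WK; rewrite WK; have [_ ->] := Ksub W WK.
  case/andP=> /orP[] // /imsetP [X XJ ->] sU; exfalso.
  have [ne sX] := Jsub X XJ; case/set0Pn: ne => y yX.
  have yY := subsetP (subset_trans (hunion_sub H X Y) sU) y yX.
  have yZ := subsetP sX y yX.
  by move/setP: YZ => /(_ y); rewrite in_setI yY yZ inE.
- rewrite -e; apply/setP=> X; apply/idP/in_trace.
    move=> XJ; have [ne sX] := Jsub X XJ; exists (hunion H X Y).
      by rewrite /cont inE; apply/orP; right; apply/imsetP; exists X.
    by rewrite hunionZ.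
  move=> [W]; rewrite /cont inE => /orP[WK|/imsetP [X' X'J ->]] [eX ne].
    exfalso; have [_ sW] := Ksub W WK; move: ne; rewrite eX.
    by apply/negP; rewrite negbK -subset0 -YZ setSI.
  by rewrite eX hunionZ //; have [_ ->] := Jsub X' X'J.
Qed.
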